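(* Let $\Pi$ be a finite projective plane of order $n\ge 2$ with point set $P$ and line set $L$. Let $G(\Pi)$ be the graph with vertex set $P\cup L$ in which $P$ is a clique, $L$ is a stable set, and a point $p\in P$ is adjacent to a line $\ell\in L$ iff $p$ is incident with $\ell$ in $\Pi$. Then $G(\Pi)$ is $\cap$-edge simplicial but not CIS.
   Context: A clique $C$ is simplicial if $C=N[v]$ for some vertex $v$; a graph is edge simplicial if every edge lies in a simplicial clique; it is $\cap$-edge simplicial if both it and its complement are edge simplicial. A graph is CIS if every maximal clique and every maximal stable set intersect. *)

(* Defs.v *)
From mathcomp Require Import all_boot.
Set Implicit Arguments. Unset Strict Implicit. Unset Printing Implicit Defensive.

Definition projective_plane (P L : finType) (inc : P -> L -> bool) : Prop :=
  [/\ forall p q : P, p != q -> exists! l : L, inc p l && inc q l,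
      forall l m : L, l != m -> exists! p : P, inc p l && inc p m &
      exists a b c d : P,
        uniq [:: a; b; c; d] /\
        forall l : L,
          ~~ [&& inc a l, inc b l & inc c l] /\
          ~~ [&& inc a l, inc b l & inc d l] /\
          ~~ [&& inc a l, inc c l & inc d l] /\
          ~~ [&& inc b l, inc c l & inc d l]].

Definition projective_plane_of_order (P L : finType) (inc : P -> L -> bool)
    (n : nat) : Prop :=
  projective_plane inc /\ forall l : L, #|[set p | inc p l]| = n.+1.

Section Graphs.
Variable T : finType.
Variable e : rel T.

Definition is_clique (C : {set T}) : Prop :=
  forall x y, x \in C -> y \in C -> x != y -> e x y.

Definition is_stable (S : {set T}) : Prop :=
  forall x y, x \in S -> y \in S -> x != y -> ~~ e x y.

Definition maximal_clique (C : {set T}) : Prop :=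
  is_clique C /\ forall D : {set T}, is_clique D -> C \subset D -> D = C.

Definition maximal_stable (S : {set T}) : Prop :=
  is_stable S /\ forall D : {set T}, is_stable D -> S \subset D -> D = S.

Definition closed_nbhd (v : T) : {set T} := [set u | (u == v) || e v u].

Definition simplicial_clique (C : {set T}) : Prop :=
  is_clique C /\ exists v, C = closed_nbhd v.

Definition edge_simplicial : Prop :=
  forall x y, e x y -> exists C, simplicial_clique C /\ x \in C /\ y \in C.

Definition CIS : Prop :=
  forall C S, maximal_clique C -> maximal_stable S -> exists x, x \in C :&: S.

End Graphs.

Definition complement_graph (T : finType) (e : rel T) : rel T :=
  fun x y => (x != y) && ~~ e x y.

Definition cap_edge_simplicial (T : finType) (e : rel T) : Prop :=
  edge_simplicial e /\ edge_simplicial (complement_graph e).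

Definition G_Pi (P L : finType) (inc : P -> L -> bool) : rel (P + L)%type :=
  fun x y =>
    match x, y with
    | inl p, inl q => p != q
    | inr _, inr _ => false
    | inl p, inr l => inc p l
    | inr l, inl p => inc p l
    end.

(* Main.v *)
Require Import Defs.
From mathcomp Require Import all_boot.
Set Implicit Arguments. Unset Strict Implicit. Unset Printing Implicit Defensive.

Section PP.
Variables (P L : finType) (inc : P -> L -> bool) (n : nat).
Hypothesis n2 : 2 <= n.
Hypothesis H : projective_plane_of_order inc n.

Lemma third_pt l u v : exists w, [&& inc w l, w != u & w != v].
Proof.
case: H => _ /(_ l) Hc.
case: (boolP [exists w, [&& inc w l, w != u & w != v]]) => [/existsP [w Hw]|/existsPn Hn]; first by exists w.
exfalso.
have : [set p | inc p l] \subset [set u; v].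
  apply/subsetP => w; rewrite !inE => Hw.
  move: (Hn w); rewrite Hw /= negb_and !negbK; case/orP => ->; by rewrite ?orbT.
move/subset_leq_card; rewrite Hc cards2.
by case: (u != v) => /=; rewrite ltnS; move/(leq_trans n2).
Qed.

Lemma line_uniq p q l m : p != q -> inc p l -> inc q l -> inc p m -> inc q m -> l = m.
Proof.
case: H => -[H1 _ _] _ pq pl ql pm qm.
case: (H1 p q pq) => k [_ Hk].
by rewrite -(Hk l) ?pl ?ql // (Hk m) ?pm ?qm.
Qed.

Lemma pt_uniq p q l m : l != m -> inc p l -> inc p m -> inc q l -> inc q m -> p = q.
Proof.
case: H => -[_ H2 _] _ lm pl pm ql qm.
case: (H2 l m lm) => k [_ Hk].
by rewrite -(Hk p) ?pl ?pm // (Hk q) ?ql ?qm.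
Qed.

Lemma line_through p q : exists l, inc p l && inc q l.
Proof.
case: (eqVneq p q) => [<-|pq].
  case: H => -[_ _ [a [b [c [d [Hu _]]]]]] _.
  have [r rp] : exists r, r != p.
    case: (eqVneq a p) => [ap|ap]; last by exists a.
    exists b; rewrite -ap; move: Hu => /=; rewrite !inE eq_sym; case: (b == a) => //=.
  case: H => -[H1 _ _] _; have rp' : p != r by rewrite eq_sym.
  case: (H1 p r rp') => k [/andP [pk _] _]; exists k; by rewrite pk.
case: H => -[H1 _ _] _; case: (H1 p q pq) => k [Hk _]; by exists k.
Qed.

Lemma pt_off l : exists p, ~~ inc p l.
Proof.
case: H => -[_ _ [a [b [c [d [_ Hl]]]]]] _.
case: (Hl l) => /negP H3 _.
case Ha: (inc a l); last by exists a; rewrite Ha.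
case Hb: (inc b l); last by exists b; rewrite Hb.
case Hc: (inc c l); last by exists c; rewrite Hc.
by exfalso; apply: H3; rewrite Ha Hb Hc.
Qed.

Lemma pt_off2 l m : l != m -> exists p, ~~ inc p l && ~~ inc p m.
Proof.
move=> lm.
case: H => -[_ H2 _] _; case: (H2 l m lm) => x [/andP [xl xm] _].
have [a /and3P [al ax _]] := third_pt l x x.
have [b /and3P [bm bx _]] := third_pt m x x.
have am : ~~ inc a m.
  apply/negP => am; move/eqP: ax; apply; exact: (pt_uniq lm).
have bl : ~~ inc b l.
  apply/negP => bl; move/eqP: bx; apply; exact: (pt_uniq lm).
have ab : a != b by apply/negP => /eqP E; move: am; rewrite E bm.
have [k /andP [ak bk]] := line_through a b.
have [c /and3P [ck ca cb]] := third_pt k a b.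
exists c; apply/andP; split; apply/negP => cl.
  have E : k = l by apply: (line_uniq ca).
  by move: bl; rewrite -E bk.
have E : k = m by apply: (line_uniq cb).
by move: am; rewrite -E ak.
Qed.

End PP.

Theorem proposition31 (P L : finType) (inc : P -> L -> bool) (n : nat) :
  2 <= n -> projective_plane_of_order inc n ->
  cap_edge_simplicial (G_Pi inc) /\ ~ CIS (G_Pi inc).
Proof.
move=> n2 H.
have El : forall a b : P, (inl a == inl b :> P + L) = (a == b).
  by move=> a b; apply/eqP/eqP => [[]|->].
have Er : forall a b : L, (inr a == inr b :> P + L) = (a == b).
  by move=> a b; apply/eqP/eqP => [[]|->].
have simpL : forall l, simplicial_clique (G_Pi inc) (closed_nbhd (G_Pi inc) (inr l)).
  move=> l; split; last by exists (inr l).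
  move=> [x|x] [y|y]; rewrite !inE /= // ?orbF.
  - by move=> xl /eqP [->].
  - by move=> /eqP [->].
  - by move=> /eqP -> /eqP ->; rewrite eqxx.
have simpC : forall p, simplicial_clique (complement_graph (G_Pi inc))
                   (closed_nbhd (complement_graph (G_Pi inc)) (inl p)).
  move=> p; split; last by exists (inl p).
  move=> [x|x] [y|y]; rewrite /complement_graph !inE /= ?negbK ?El ?Er ?andbT //.
  - by move=> /orP [/eqP ->|/andP [/negP //]] /orP [/eqP ->|/andP [/negP //]]; rewrite eqxx.
  - by move=> /orP [/eqP ->|/andP [/negP //]].
  - by move=> ? /orP [/eqP ->|/andP [/negP //]].
split; first split.
- move=> [p|l] [q|m] //=.
  + move=> pq; have [l /andP [pl ql]] := line_through H p q.
    exists (closed_nbhd (G_Pi inc) (inr l)); split => //; by rewrite !inE /= pl ql.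
  + move=> pm; exists (closed_nbhd (G_Pi inc) (inr m)); split => //; by rewrite !inE /= pm eqxx.
  + move=> pl; exists (closed_nbhd (G_Pi inc) (inr l)); split => //; by rewrite !inE /= pl eqxx.
- move=> [p|l] [q|m]; rewrite /complement_graph /= ?negbK ?El ?Er ?andbT //.
  + by case/andP => /negP.
  + move=> pm; exists (closed_nbhd (complement_graph (G_Pi inc)) (inl p)).
    by split => //; rewrite !inE /complement_graph /= eqxx pm.
  + move=> qm; exists (closed_nbhd (complement_graph (G_Pi inc)) (inl q)).
    by split => //; rewrite !inE /complement_graph /= eqxx qm.
  + move=> lm.
    have [p /andP [pl pm]] := pt_off2 n2 H lm.
    exists (closed_nbhd (complement_graph (G_Pi inc)) (inl p)).
    by split => //; rewrite !inE /complement_graph /= pl pm.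
- move=> HC.
  pose C : {set P + L} := [set x | if x is inl _ then true else false].
  pose S : {set P + L} := [set x | if x is inr _ then true else false].
  have HCc : maximal_clique (G_Pi inc) C.
  { split.
      by move=> [p|l] [q|m]; rewrite !inE //= => _ _ /eqP pq; apply/eqP => E; apply: pq; rewrite E.
    move=> D HD sCD; apply/eqP; rewrite eqEsubset; apply/andP; split => //.
    apply/subsetP => -[p|l] Dl; rewrite inE //.
    have [p pl] := pt_off H l.
    have /HD : inl p \in D by apply: (subsetP sCD); rewrite inE.
    by move/(_ _ Dl isT) => /=; rewrite (negbTE pl). }
  have HSs : maximal_stable (G_Pi inc) S.
  { split.
      by move=> [p|l] [q|m]; rewrite !inE.
    move=> D HD sSD; apply/eqP; rewrite eqEsubset; apply/andP; split => //.
    apply/subsetP => -[p|l] Dp; rewrite inE //.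
    have [l /andP [pl _]] := line_through H p p.
    have /HD : inr l \in D by apply: (subsetP sSD); rewrite inE.
    by move/(_ _ Dp isT) => /=; rewrite pl. }
  have [x] := HC C S HCc HSs.
  by case: x => ?; rewrite !inE.
Qed.
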